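(* Let $v,k,t$ be integers with $v>k>t\ge 2$. Let $X$ be a $v$-set and let $X=X_1\cup X_2$ be a partition of $X$ with $|X_1|=v_1$ and $|X_2|=v_2$. For $i=0,\dots,t$ let $D_i=(X_1,\mathfrak B^{(i)})$ be the complete $i$-$(v_1,i,1)$ design (all $i$-subsets of $X_1$), and for $i=t+1,\dots,k$ let $D_i=(X_1,\mathfrak B^{(i)})$ be a simple $t$-$(v_1,i,\lambda^{(i)}_t)$ design. Similarly, for $i=0,\dots,t$ let $\bar D_i=(X_2,\bar{\mathfrak B}^{(i)})$ be the complete $i$-$(v_2,i,1)$ design, and for $i=t+1,\dots,k$ let $\bar D_i=(X_2,\bar{\mathfrak B}^{(i)})$ be a simple $t$-$(v_2,i,\bar\lambda^{(i)}_t)$ design. Let $K=\{(0,k),(1,k-1),\dots,(k-1,1),(k,0)\}$. Suppose there is a subset $R\subseteq K$ such that for each $(i,k-i)\in R$ the block set of $D_i$ is partitioned into $N_i$ classes $\mathfrak A^{(i)}_1,\dots,\mathfrak A^{(i)}_{N_i}$, each $(X_1,\mathfrak A^{(i)}_h)$ being an $s_i$-$(v_1,i,\lambda^{*(i)}_{s_i})$ design (same index for all $h$), with $s_i<t$, and the block set of $\bar D_{k-i}$ is partitioned into $\bar N_{k-i}$ classes $\bar{\mathfrak A}^{(k-i)}_1,\dots,\bar{\mathfrak A}^{(k-i)}_{\bar N_{k-i}}$, each $(X_2,\bar{\mathfrak A}^{(k-i)}_j)$ being an $s_{k-i}$-$(v_2,k-i,\bar\lambda^{*(k-i)}_{s_{k-i}})$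 design (same index for all $j$), with $s_{k-i}<t$, such that (i) $N_i=\bar N_{k-i}$, and (ii) $s_i+s_{k-i}\ge 2\lfloor t/2\rfloor$. For each $(i,k-i)\in R$ choose $\varepsilon_i\in\{0,1\}$ and an integer $w_i$ with $\varepsilon_i\le w_i\le\lfloor N_i/2\rfloor$, and set $$\mathfrak B^*_{(i,k-i)}=\{B_i\cup\bar B_{k-i}:\ B_i\in\mathfrak A^{(i)}_h,\ \bar B_{k-i}\in\bar{\mathfrak A}^{(k-i)}_j,\ \varepsilon_i\le d(h,j)\le w_i\},$$ where $d(h,j)=\min\{|h-j|,\,N_i-|h-j|\}$ for $h,j\in\{1,\dots,N_i\}$; and put $z_i=2w_i+1-\varepsilon_i$ if $w_i<N_i/2$, and $z_i=2w_i-\varepsilon_i$ if $w_i=N_i/2$. For each $(i,k-i)\in K\setminus R$ set $$\mathfrak B_{(i,k-i)}=\{B_i\cup\bar B_{k-i}:\ B_i\in\mathfrak B^{(i)},\ \bar B_{k-i}\in\bar{\mathfrak B}^{(k-i)}\}.$$ Choose $u_i\in\{0,1\}$ for $i=0,\dots,k$ and define $$\mathfrak B=\bigcup_{(i,k-i)\in R}\mathfrak B^*_{(i,k-i)}\times[u_i]\ \cup\bigcup_{(i,k-i)\in K\setminus R}\mathfrak B_{(i,k-i)}\times[u_i].$$ For $r=0,\dots,t$ define $$L_{r,t-r}=\sum_{(i,k-i)\in R}u_i\,\Lambda^{*(i,k-i)}_{(r,t-r)}+\sum_{(i,k-i)\in K\setminus R}u_i\,\lambda^{(i)}_r\,\bar\lambda^{(k-i)}_{t-r},$$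 where $$\Lambda^{*(i,k-i)}_{(r,t-r)}=\begin{cases}\lambda^{*(i)}_r\,\bar\lambda^{*(k-i)}_{t-r}\,N_i\,z_i & \text{if } r\le s_i,\ t-r\le s_{k-i},\\ \lambda^{*(i)}_r\,\bar\lambda^{(k-i)}_{t-r}\,z_i & \text{if } r\le s_i,\ t-r>s_{k-i},\\ \lambda^{(i)}_r\,\bar\lambda^{*(k-i)}_{t-r}\,z_i & \text{if } r>s_i,\ t-r\le s_{k-i}.\end{cases}$$ If $L_{0,t}=L_{1,t-1}=\dots=L_{t,0}=\Lambda$ for some positive integer $\Lambda$, then $(X,\mathfrak B)$ is a simple $t$-$(v,k,\Lambda)$ design.
   Context: A $t$-$(v,k,\lambda)$ design is a pair $(X,\mathfrak B)$ with $|X|=v$ and $\mathfrak B$ a collection of $k$-subsets (blocks) of $X$ such that every $t$-subset of $X$ lies in exactly $\lambda$ blocks; it is simple if no block is repeated. A $t$-$(v,k,\lambda)$ design is also an $s$-$(v,k,\lambda_s)$ design for $0\le s\le t$ with $\lambda_s=\lambda\binom{v-s}{t-s}/\binom{k-s}{t-s}$. Conventions: the $0$-$(v_1,0,1)$ design has exactly one block, the empty set; a design with $k$ equal to the number of points has the single block consisting of all points. Notation: $\lambda^{(i)}_r$ denotes the number of blocks of $D_i$ containing a given $r$-subset of $X_1$ (for $0\le r\le t$; it is $0$ when $r>i$), and $\bar\lambda^{(i)}_r$ the analogous number for $\bar D_i$ and $X_2$. For $r\le s_i$, $\lambda^{*(i)}_r$ denotes the number of blocks of a class $\mathfrak A^{(i)}_h$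 containing a given $r$-subset of $X_1$ (independent of $h$ and of the subset), and $\bar\lambda^{*(k-i)}_r$ (for $r\le s_{k-i}$) the analogous number for classes $\bar{\mathfrak A}^{(k-i)}_j$. For a set $Y$ and $u\in\{0,1\}$, $Y\times[0]=\emptyset$ and $Y\times[1]=Y$. *)

(* Defs.v *)
From mathcomp Require Import all_boot.
Set Implicit Arguments.
Unset Strict Implicit.
Unset Printing Implicit Defensive.

(* Blocks are subsets of the finite point type T; a block collection is a
   {set {set T}}, hence designs are automatically simple. *)

Definition blocks_containing (T : finType) (B : {set {set T}}) (S : {set T}) : nat :=
  #|[set b in B | S \subset b]|.

Definition is_design (T : finType) (P : {set T}) (t k lam : nat)
    (B : {set {set T}}) : Prop :=
  (forall b, b \in B -> b \subset P /\ #|b| = k) /\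
  (forall S : {set T}, S \subset P -> #|S| = t -> blocks_containing B S = lam).

Definition complete_blocks (T : finType) (P : {set T}) (i : nat) : {set {set T}} :=
  [set b : {set T} | (b \subset P) && (#|b| == i)].

Definition cdist (N h j : nat) : nat :=
  let a := (h - j) + (j - h) in minn a (N - a).

Definition zval (N w : nat) (eps : bool) : nat :=
  if w.*2 < N then (w.*2).+1 - eps else w.*2 - eps.

Definition join_blocks (T : finType) (C1 C2 : {set {set T}}) : {set {set T}} :=
  [set b1 :|: b2 | b1 in C1, b2 in C2].

Definition Bstar (T : finType) (N : nat) (A Ab : nat -> {set {set T}})
    (eps : bool) (w : nat) : {set {set T}} :=
  \bigcup_(1 <= h < N.+1)
    \bigcup_(1 <= j < N.+1 | (eps <= cdist N h j) && (cdist N h j <= w))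
      join_blocks (A h) (Ab j).

(* Lambda*^(i,k-i)_(r,t-r); the fourth case (r > s_i and t-r > s_{k-i}) cannot
   occur under condition (ii) and is set to 0. Arguments:
   si = s_i, sbi = s_{k-i}, N = N_i, z = z_i, lamSr = lambda*^(i)_r,
   lamSbtr = bar lambda*^(k-i)_(t-r), lamr = lambda^(i)_r,
   lambtr = bar lambda^(k-i)_(t-r). *)
Definition Lambda_star (t r si sbi N z lamSr lamSbtr lamr lambtr : nat) : nat :=
  if r <= si then
    (if t - r <= sbi then lamSr * lamSbtr * N * z else lamSr * lambtr * z)
  else
    (if t - r <= sbi then lamr * lamSbtr * z else 0).

(* Main.v *)
Require Import Defs.
From mathcomp Require Import all_boot.
From mathcomp Require Import zify.
Set Implicit Arguments. Unset Strict Implicit. Unset Printing Implicit Defensive.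

Lemma bc_sum (T : finType) (F : {set {set T}}) S :
  blocks_containing F S = \sum_(b in F) (S \subset b : nat).
Proof.
rewrite /blocks_containing -sum1_card.
rewrite (eq_bigl (fun b => (b \in F) && (S \subset b))) => [|b]; last by rewrite inE.
by rewrite big_mkcondr /=; apply: eq_bigr => b _; case: (S \subset b).
Qed.

Lemma mem_bigcup_seq (T : finType) (I : Type) (r : seq I) (P : pred I) (G : I -> {set T}) x :
  (x \in \bigcup_(i <- r | P i) G i) = has (fun i => P i && (x \in G i)) r.
Proof.
elim: r => [|a r IH]; first by rewrite big_nil inE.
rewrite big_cons /=; case: (P a) => /=; last by [].
by rewrite in_setU IH.
Qed.

Lemma sum_setU_disj (T : finType) (A B : {set T}) (f : T -> nat) :
  [disjoint A & B] -> \sum_(x in A :|: B) f x = \sum_(x in A) f x + \sum_(x in B) f x.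
Proof.
move=> dAB; rewrite -bigU //; apply: eq_bigl => x; by rewrite !inE.
Qed.

Lemma sum_bigcup (T : finType) (I : eqType) (r : seq I) (P : pred I) (G : I -> {set T}) f :
  uniq r ->
  (forall i j, i \in r -> j \in r -> P i -> P j -> i != j -> [disjoint G i & G j]) ->
  \sum_(x in \bigcup_(i <- r | P i) G i) f x = \sum_(i <- r | P i) \sum_(x in G i) f x.
Proof.
elim: r => [|a r IH] /=; first by rewrite !big_nil big_set0.
move=> /andP [ar ur] dis.
have dis' : forall i j, i \in r -> j \in r -> P i -> P j -> i != j -> [disjoint G i & G j].
  by move=> i j ir jr; apply: dis; rewrite inE ?ir ?jr orbT.
rewrite !big_cons; case Pa: (P a); last exact: IH.
rewrite sum_setU_disj ?IH //.
rewrite -setI_eq0; apply/eqP/setP => x; rewrite !inE mem_bigcup_seq.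
apply/negbTE/negP => /andP [xa /hasP [j jr /andP [Pj xj]]].
have aj : a != j by apply/eqP => E; rewrite E jr in ar.
have ja : j \in a :: r by rewrite inE jr orbT.
by rewrite (disjointFr (dis a j (mem_head _ _) ja Pa Pj aj) xa) in xj.
Qed.

Lemma partI1 (T : finType) (X1 X2 b1 b2 : {set T}) :
  [disjoint X1 & X2] -> b1 \subset X1 -> b2 \subset X2 -> (b1 :|: b2) :&: X1 = b1.
Proof.
move=> d s1 s2; apply/setP => x; rewrite !inE.
case x1: (x \in b1); first by rewrite (subsetP s1).
case x2: (x \in b2) => //=.
by rewrite (disjointFl d (subsetP s2 _ x2)).
Qed.

Lemma partI2 (T : finType) (X1 X2 b1 b2 : {set T}) :
  [disjoint X1 & X2] -> b1 \subset X1 -> b2 \subset X2 -> (b1 :|: b2) :&: X2 = b2.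
Proof.
move=> d s1 s2; rewrite setUC; apply: (partI1 _ s2 s1).
by rewrite disjoint_sym.
Qed.

Lemma sum_join (T : finType) (X1 X2 : {set T}) (C1 C2 : {set {set T}}) (f : {set T} -> nat) :
  [disjoint X1 & X2] -> (forall b, b \in C1 -> b \subset X1) ->
  (forall b, b \in C2 -> b \subset X2) ->
  \sum_(b in join_blocks C1 C2) f b = \sum_(b1 in C1) \sum_(b2 in C2) f (b1 :|: b2).
Proof.
move=> d h1 h2; rewrite /join_blocks curry_imset2X big_imset /=; last first.
  move=> [a1 a2] [c1 c2]; rewrite !in_setX /= => /andP [a1C a2C] /andP [c1C c2C] E.
  have E1 := partI1 d (h1 _ a1C) (h2 _ a2C); rewrite E (partI1 d (h1 _ c1C) (h2 _ c2C)) in E1.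
  have E2 := partI2 d (h1 _ a1C) (h2 _ a2C); rewrite E (partI2 d (h1 _ c1C) (h2 _ c2C)) in E2.
  by rewrite E1 E2.
rewrite pair_big_dep /=; apply: eq_big => [[a b]|[a b] _] //; by rewrite in_setX.
Qed.

Lemma sub_split (T : finType) (X1 X2 b1 b2 S : {set T}) :
  [disjoint X1 & X2] -> b1 \subset X1 -> b2 \subset X2 -> S \subset X1 :|: X2 ->
  (S \subset b1 :|: b2) = (S :&: X1 \subset b1) && (S :&: X2 \subset b2).
Proof.
move=> d s1 s2 sS; apply/idP/andP.
  move=> H; split.
    by rewrite -(partI1 d s1 s2); apply: setSI.
  by rewrite -(partI2 d s1 s2); apply: setSI.
move=> [H1 H2]; apply/subsetP => x xS.
move/subsetP: sS => /(_ x xS); rewrite !inE => /orP [] xX.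
  by rewrite (subsetP H1) // inE xS.
by rewrite (subsetP H2) ?orbT // inE xS.
Qed.

Lemma count_join (T : finType) (X1 X2 : {set T}) (C1 C2 : {set {set T}}) (S : {set T}) :
  [disjoint X1 & X2] -> (forall b, b \in C1 -> b \subset X1) ->
  (forall b, b \in C2 -> b \subset X2) -> S \subset X1 :|: X2 ->
  \sum_(b in join_blocks C1 C2) (S \subset b : nat) =
  blocks_containing C1 (S :&: X1) * blocks_containing C2 (S :&: X2).
Proof.
move=> d h1 h2 sS; rewrite (sum_join _ d h1 h2) !bc_sum big_distrl /=.
apply: eq_bigr => b1 b1C; rewrite big_distrr /=; apply: eq_bigr => b2 b2C.
by rewrite (sub_split d (h1 _ b1C) (h2 _ b2C) sS) mulnb.
Qed.

Definition Pd (N : nat) (eps : bool) (w m : nat) : nat :=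
  (eps <= minn m (N - m)) && (minn m (N - m) <= w).

Lemma piece a b c (F : nat -> nat) : (forall m, a <= m < b -> F m = c) ->
  \sum_(a <= m < b) F m = (b - a) * c.
Proof. by move=> H; rewrite (eq_big_nat _ _ H) sum_nat_const_nat. Qed.

Lemma Pd1 N (eps : bool) w m : eps <= minn m (N - m) -> minn m (N - m) <= w -> Pd N eps w m = 1.
Proof. by rewrite /Pd => -> ->. Qed.
Lemma Pd0a N (eps : bool) w m : minn m (N - m) < eps -> Pd N eps w m = 0.
Proof. by rewrite /Pd ltnNge => /negbTE ->. Qed.
Lemma Pd0b N (eps : bool) w m : w < minn m (N - m) -> Pd N eps w m = 0.
Proof. by rewrite /Pd ltnNge => /negbTE ->; rewrite andbF. Qed.

Lemma count_P N w (eps : bool) : eps <= w -> w <= N./2 ->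
  \sum_(0 <= m < N) Pd N eps w m = zval N w eps.
Proof.
move=> ew wN.
case: N wN => [|N] wN.
  by rewrite /zval big_geq //=; case: eps ew; case: w wN.
rewrite (@big_cat_nat _ _ _ eps 0 N.+1) //=; last by lia.
rewrite (@big_cat_nat _ _ _ w.+1 eps N.+1) //=; try lia.
rewrite (piece (c := 0)) /=; last by move=> m Hm; apply: Pd0a; lia.
rewrite (piece (c := 1)) /=; last by move=> m Hm; apply: Pd1; lia.
rewrite /zval; case: ltnP => H2.
  rewrite (@big_cat_nat _ _ _ (N.+1 - w) w.+1 N.+1) //=; try lia.
  rewrite (piece (c := 0)) /=; last by move=> m Hm; apply: Pd0b; lia.
  rewrite (piece (c := 1)) /=; last by move=> m Hm; apply: Pd1; lia.
  lia.
rewrite (piece (c := 1)) /=; last by move=> m Hm; apply: Pd1; lia.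
lia.
Qed.

Definition sh (N h j : nat) := if h <= j then j - h else j + N - h.

Lemma shift_sum N h (g : nat -> nat) : 1 <= h <= N ->
  \sum_(1 <= j < N.+1) g (sh N h j) = \sum_(0 <= m < N) g m.
Proof.
move=> hN; rewrite /index_iota subSS !subn0 -(big_map (sh N h) predT g).
apply: perm_big; apply: uniq_perm; rewrite ?iota_uniq //.
  rewrite map_inj_in_uniq ?iota_uniq // => a b; rewrite !mem_iota /sh => Ha Hb.
  by case: ifP => Ha'; case: ifP => Hb'; lia.
move=> m; rewrite mem_iota; apply/mapP/idP.
  by move=> [j]; rewrite mem_iota /sh => Hj ->; case: ifP => Hj'; lia.
move=> Hm; exists (if m + h <= N then m + h else m + h - N).
  by rewrite mem_iota; case: ifP => H; lia.
by case E: (m + h <= N); rewrite /sh; case: ifP => H'; lia.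
Qed.

Lemma cdist_sh N h j : 1 <= h <= N -> 1 <= j <= N ->
  cdist N h j = minn (sh N h j) (N - sh N h j).
Proof. by rewrite /cdist /sh => Hh Hj; case: ifP => H; lia. Qed.

Lemma cdistC N h j : cdist N h j = cdist N j h.
Proof. by rewrite /cdist addnC. Qed.

Lemma count_cd N h w (eps : bool) c : 1 <= h <= N -> eps <= w -> w <= N./2 ->
  \sum_(1 <= j < N.+1 | (eps <= cdist N h j) && (cdist N h j <= w)) c = c * zval N w eps.
Proof.
move=> hN ew wN; rewrite big_mkcond /=.
rewrite (eq_big_nat _ _ (F2 := fun j => c * Pd N eps w (sh N h j))); last first.
  move=> j Hj; have Hj' : 1 <= j <= N by lia.
  rewrite cdist_sh //.
  by rewrite /Pd; case: ifP => _; rewrite ?muln1 ?muln0.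
by rewrite (shift_sum (fun m => c * Pd N eps w m)) // -big_distrr /= count_P.
Qed.

Lemma join_mem (T : finType) (X1 X2 : {set T}) (C1 C2 : {set {set T}}) b :
  [disjoint X1 & X2] -> (forall b, b \in C1 -> b \subset X1) ->
  (forall b, b \in C2 -> b \subset X2) -> b \in join_blocks C1 C2 ->
  b :&: X1 \in C1 /\ b :&: X2 \in C2.
Proof.
move=> d h1 h2 /imset2P [b1 b2 m1 m2 ->].
by rewrite (partI1 d (h1 _ m1) (h2 _ m2)) (partI2 d (h1 _ m1) (h2 _ m2)).
Qed.

Lemma count_bstar (T : finType) (X1 X2 : {set T}) N (A Ab : nat -> {set {set T}})
    (eps : bool) w (S : {set T}) :
  [disjoint X1 & X2] ->
  (forall h, 1 <= h <= N -> forall b, b \in A h -> b \subset X1) ->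
  (forall j, 1 <= j <= N -> forall b, b \in Ab j -> b \subset X2) ->
  (forall h h', 1 <= h <= N -> 1 <= h' <= N -> h != h' -> [disjoint A h & A h']) ->
  (forall h h', 1 <= h <= N -> 1 <= h' <= N -> h != h' -> [disjoint Ab h & Ab h']) ->
  S \subset X1 :|: X2 ->
  \sum_(b in Bstar N A Ab eps w) (S \subset b : nat) =
  \sum_(1 <= h < N.+1) \sum_(1 <= j < N.+1 | (eps <= cdist N h j) && (cdist N h j <= w))
     blocks_containing (A h) (S :&: X1) * blocks_containing (Ab j) (S :&: X2).
Proof.
move=> d hA hAb dA dAb sS.
rewrite /Bstar sum_bigcup ?iota_uniq //; last first.
  move=> h h' hr h'r _ _ hh'; rewrite !mem_index_iota in hr h'r.
  rewrite -setI_eq0; apply/eqP/setP => x; rewrite !inE !mem_bigcup_seq.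
  apply/negbTE/andP => -[/hasP [j jr /andP [_ xj]] /hasP [j' j'r /andP [_ xj']]].
  rewrite !mem_index_iota in jr j'r.
  have [m1 _] := join_mem d (hA h ltac:(lia)) (hAb j ltac:(lia)) xj.
  have [m2 _] := join_mem d (hA h' ltac:(lia)) (hAb j' ltac:(lia)) xj'.
  by rewrite (disjointFr (dA h h' ltac:(lia) ltac:(lia) hh') m1) in m2.
apply: eq_big_nat => h hr.
rewrite sum_bigcup ?iota_uniq //; last first.
  move=> j j' jr j'r _ _ jj'; rewrite !mem_index_iota in jr j'r.
  rewrite -setI_eq0; apply/eqP/setP => x; rewrite !inE.
  apply/negbTE/andP => -[xj xj'].
  have [_ m1] := join_mem d (hA h ltac:(lia)) (hAb j ltac:(lia)) xj.
  have [_ m2] := join_mem d (hA h ltac:(lia)) (hAb j' ltac:(lia)) xj'.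
  by rewrite (disjointFr (dAb j j' ltac:(lia) ltac:(lia) jj') m1) in m2.
rewrite big_seq_cond [RHS]big_seq_cond; apply: eq_bigr => j /andP [jr _].
rewrite mem_index_iota in jr.
by rewrite (count_join d (hA h ltac:(lia)) (hAb j ltac:(lia)) sS).
Qed.

Lemma dsum_right N (eps : bool) w (f g : nat -> nat) c :
  eps <= w -> w <= N./2 -> (forall j, 1 <= j <= N -> g j = c) ->
  \sum_(1 <= h < N.+1) \sum_(1 <= j < N.+1 | (eps <= cdist N h j) && (cdist N h j <= w))
     f h * g j = c * zval N w eps * \sum_(1 <= h < N.+1) f h.
Proof.
move=> ew wN hg; rewrite big_distrr /=; apply: eq_big_nat => h hr.
rewrite big_seq_cond (eq_bigr (fun _ => f h * c)); last first.
  by move=> j /andP [jr _]; rewrite mem_index_iota in jr; rewrite hg //; lia.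
rewrite -big_seq_cond count_cd //; nia.
Qed.

Lemma dsum_left N (eps : bool) w (f g : nat -> nat) a :
  eps <= w -> w <= N./2 -> (forall h, 1 <= h <= N -> f h = a) ->
  \sum_(1 <= h < N.+1) \sum_(1 <= j < N.+1 | (eps <= cdist N h j) && (cdist N h j <= w))
     f h * g j = a * zval N w eps * \sum_(1 <= j < N.+1) g j.
Proof.
move=> ew wN hf.
rewrite (eq_big_nat _ _ (F2 := fun h => \sum_(1 <= j < N.+1)
   (if (eps <= cdist N h j) && (cdist N h j <= w) then a * g j else 0))); last first.
  move=> h hr; rewrite big_mkcond /=; apply: eq_bigr => j _; rewrite hf //; lia.
rewrite exchange_big big_distrr /=; apply: eq_big_nat => j jr.
rewrite (eq_bigr (fun h => if (eps <= cdist N j h) && (cdist N j h <= w) then a * g j else 0)).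
  by rewrite -big_mkcond /= count_cd //; nia.
by move=> h _; rewrite cdistC.
Qed.

Lemma dsum_const N (eps : bool) w (f g : nat -> nat) a c :
  eps <= w -> w <= N./2 -> (forall h, 1 <= h <= N -> f h = a) ->
  (forall j, 1 <= j <= N -> g j = c) ->
  \sum_(1 <= h < N.+1) \sum_(1 <= j < N.+1 | (eps <= cdist N h j) && (cdist N h j <= w))
     f h * g j = a * c * N * zval N w eps.
Proof.
move=> ew wN hf hg; rewrite (dsum_right f ew wN hg).
rewrite (eq_big_nat _ _ (F2 := fun _ => a)) ?sum_nat_const_nat; last by move=> h hr; apply: hf; lia.
rewrite subn1 /=; lia.
Qed.

Unset Implicit Arguments.

Theorem theorem3p1
  (X : finType) (v k t v1 v2 : nat) (X1 X2 : {set X})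
  (B Bb : nat -> {set {set X}})
  (lam lamb : nat -> nat -> nat)
  (R : pred nat)
  (N Nb s sb : nat -> nat)
  (A Ab : nat -> nat -> {set {set X}})
  (lamS lamSb : nat -> nat -> nat)
  (eps : nat -> bool) (w : nat -> nat) (u : nat -> bool) (Lam : nat) :
  (* parameters and the partition X = X1 u X2 *)
  2 <= t -> t < k -> k < v ->
  #|X| = v -> [disjoint X1 & X2] -> X1 :|: X2 = [set: X] ->
  #|X1| = v1 -> #|X2| = v2 ->
  (* the designs D_i and bar D_i *)
  (forall i, i <= t -> B i = complete_blocks X1 i) ->
  (forall i, t < i <= k -> is_design X1 t i (lam i t) (B i)) ->
  (forall i, i <= t -> Bb i = complete_blocks X2 i) ->
  (forall i, t < i <= k -> is_design X2 t i (lamb i t) (Bb i)) ->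
  (* lambda^(i)_r and bar lambda^(i)_r *)
  (forall i r (S : {set X}), i <= k -> r <= t -> S \subset X1 -> #|S| = r ->
      blocks_containing (B i) S = lam i r) ->
  (forall i r (S : {set X}), i <= k -> r <= t -> S \subset X2 -> #|S| = r ->
      blocks_containing (Bb i) S = lamb i r) ->
  (* for (i,k-i) in R: partition of D_i into N_i classes *)
  (forall i, i <= k -> R i ->
     (forall h, 1 <= h <= N i -> A i h != set0) /\
     (forall h h', 1 <= h <= N i -> 1 <= h' <= N i -> h != h' ->
        [disjoint A i h & A i h']) /\
     (\bigcup_(1 <= h < (N i).+1) A i h = B i) /\
     (forall h, 1 <= h <= N i -> is_design X1 (s i) i (lamS i (s i)) (A i h)) /\
     (forall h r (S : {set X}), 1 <= h <= N i -> r <= s i -> S \subset X1 ->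
        #|S| = r -> blocks_containing (A i h) S = lamS i r) /\
     s i < t) ->
  (* for (i,k-i) in R: partition of bar D_{k-i} into bar N_{k-i} classes *)
  (forall i, i <= k -> R i ->
     (forall j, 1 <= j <= Nb (k - i) -> Ab (k - i) j != set0) /\
     (forall j j', 1 <= j <= Nb (k - i) -> 1 <= j' <= Nb (k - i) -> j != j' ->
        [disjoint Ab (k - i) j & Ab (k - i) j']) /\
     (\bigcup_(1 <= j < (Nb (k - i)).+1) Ab (k - i) j = Bb (k - i)) /\
     (forall j, 1 <= j <= Nb (k - i) ->
        is_design X2 (sb (k - i)) (k - i) (lamSb (k - i) (sb (k - i))) (Ab (k - i) j)) /\
     (forall j r (S : {set X}), 1 <= j <= Nb (k - i) -> r <= sb (k - i) ->
        S \subset X2 -> #|S| = r -> blocks_containing (Ab (k - i) j) S = lamSb (k - i) r) /\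
     sb (k - i) < t) ->
  (* conditions (i) and (ii) *)
  (forall i, i <= k -> R i -> N i = Nb (k - i)) ->
  (forall i, i <= k -> R i -> (t./2).*2 <= s i + sb (k - i)) ->
  (* choice of eps_i and w_i *)
  (forall i, i <= k -> R i -> eps i <= w i <= (N i)./2) ->
  (* L_{r,t-r} = Lam > 0 for all r *)
  0 < Lam ->
  (forall r, r <= t ->
     \sum_(0 <= i < k.+1 | R i)
        u i * Lambda_star t r (s i) (sb (k - i)) (N i) (zval (N i) (w i) (eps i))
                (lamS i r) (lamSb (k - i) (t - r)) (lam i r) (lamb (k - i) (t - r))
     + \sum_(0 <= i < k.+1 | ~~ R i) u i * (lam i r * lamb (k - i) (t - r))
     = Lam) ->
  is_design [set: X] t k Lam
    ((\bigcup_(0 <= i < k.+1 | R i && u i)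
        Bstar (N i) (A i) (Ab (k - i)) (eps i) (w i))
     :|: (\bigcup_(0 <= i < k.+1 | ~~ R i && u i)
        join_blocks (B i) (Bb (k - i)))).
Proof.
move=> t2 tk kv cX dX cov cX1 cX2 hBc hBd hBbc hBbd hlam hlamb hA hAb hN hs hew Lpos hL.
have X2C : X2 = ~: X1.
  apply/setP => x; rewrite inE.
  have : x \in X1 :|: X2 by rewrite cov inE.
  rewrite inE; case x1: (x \in X1) => //= _.
  by rewrite (disjointFr dX x1).
have sT : forall S : {set X}, S \subset X1 :|: X2 by move=> S; rewrite cov subsetT.
have hB1 : forall i, i <= k -> forall b, b \in B i -> b \subset X1 /\ #|b| = i.
  move=> i ik b; case: (leqP i t) => it.
    by rewrite hBc // inE => /andP [ss /eqP c].
  by have := hBd i; rewrite it ik => /(_ isT) [H _] /H.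
have hB2 : forall i, i <= k -> forall b, b \in Bb i -> b \subset X2 /\ #|b| = i.
  move=> i ik b; case: (leqP i t) => it.
    by rewrite hBbc // inE => /andP [ss /eqP c].
  by have := hBbd i; rewrite it ik => /(_ isT) [H _] /H.
have card_parts : forall b : {set X}, #|b :&: X1| + #|b :&: X2| = #|b|.
  by move=> b; rewrite X2C -setDE cardsID.
have hAsub : forall i, i <= k -> R i -> forall h, 1 <= h <= N i ->
    forall b, b \in A i h -> b \in B i.
  move=> i ik Ri h hr b bA; have [_ [_ [UA _]]] := hA i ik Ri.
  rewrite -UA mem_bigcup_seq; apply/hasP; exists h; last by rewrite /= bA.
  by rewrite mem_index_iota; lia.
have hAbsub : forall i, i <= k -> R i -> forall j, 1 <= j <= N i ->
    forall b, b \in Ab (k - i) j -> b \in Bb (k - i).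
  move=> i ik Ri j jr b bA; have [_ [_ [UA _]]] := hAb i ik Ri.
  rewrite -UA mem_bigcup_seq; apply/hasP; exists j; last by rewrite /= bA.
  by rewrite mem_index_iota -hN //; lia.
have hAX1 : forall i, i <= k -> R i -> forall h, 1 <= h <= N i ->
    forall b, b \in A i h -> b \subset X1.
  by move=> i ik Ri h hr b bA; have [] := hB1 i ik b (hAsub i ik Ri h hr b bA).
have hAbX2 : forall i, i <= k -> R i -> forall j, 1 <= j <= N i ->
    forall b, b \in Ab (k - i) j -> b \subset X2.
  move=> i ik Ri j jr b bA.
  by have [] := hB2 (k - i) (leq_subr _ _) b (hAbsub i ik Ri j jr b bA).
have sizes : forall i b, i <= k -> b :&: X1 \in B i -> b :&: X2 \in Bb (k - i) ->
    #|b :&: X1| = i /\ #|b| = k.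
  move=> i b ik m1 m2; have [_ c1] := hB1 i ik _ m1.
  have [_ c2] := hB2 (k - i) (leq_subr _ _) _ m2.
  by split => //; rewrite -card_parts c1 c2 subnKC.
have hGR : forall i, i <= k -> R i -> forall b,
    b \in Bstar (N i) (A i) (Ab (k - i)) (eps i) (w i) -> #|b :&: X1| = i /\ #|b| = k.
  move=> i ik Ri b; rewrite /Bstar mem_bigcup_seq => /hasP [h hr /andP [_]].
  rewrite mem_bigcup_seq => /hasP [j jr /andP [_ bj]].
  rewrite !mem_index_iota in hr jr.
  have [m1 m2] := join_mem dX (hAX1 i ik Ri h ltac:(lia)) (hAbX2 i ik Ri j ltac:(lia)) bj.
  apply: sizes => //.
    exact: (hAsub i ik Ri h ltac:(lia)).
  exact: (hAbsub i ik Ri j ltac:(lia)).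
have hGN : forall i, i <= k -> forall b,
    b \in join_blocks (B i) (Bb (k - i)) -> #|b :&: X1| = i /\ #|b| = k.
  move=> i ik b bj.
  have h1 : forall b, b \in B i -> b \subset X1 by move=> b0 /(hB1 i ik) [].
  have h2 : forall b, b \in Bb (k - i) -> b \subset X2 by move=> b0 /(hB2 _ (leq_subr _ _)) [].
  have [m1 m2] := join_mem dX h1 h2 bj.
  exact: sizes.
split.
  move=> b; rewrite inE => /orP [] /[!mem_bigcup_seq] /hasP [i ir /andP [/andP [Ri _] bi]];
    rewrite mem_index_iota in ir; split; rewrite ?subsetT //.
    by case: (hGR i ltac:(lia) Ri b bi).
  by case: (hGN i ltac:(lia) b bi).
move=> S _ cS.
move Er: #|S :&: X1| => r.
have cp := card_parts S.
have r2 : #|S :&: X2| = t - r by lia.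
have rt : r <= t by lia.
rewrite bc_sum sum_setU_disj; last first.
  rewrite -setI_eq0; apply/eqP/setP => b; rewrite !inE !mem_bigcup_seq.
  apply/negbTE/andP => -[/hasP [i ir /andP [/andP [Ri _] bi]] /hasP [i' i'r /andP [/andP [nRi' _] bi']]].
  rewrite !mem_index_iota in ir i'r.
  have [e1 _] := hGR i ltac:(lia) Ri b bi.
  have [e2 _] := hGN i' ltac:(lia) b bi'.
  by move: nRi'; rewrite -e2 e1 Ri.
rewrite sum_bigcup ?iota_uniq //; last first.
  move=> i i' ir i'r /andP [Ri _] /andP [Ri' _] ii'; rewrite !mem_index_iota in ir i'r.
  rewrite -setI_eq0; apply/eqP/setP => b; rewrite !inE.
  apply/negbTE/andP => -[b1 b2].
  have [e1 _] := hGR i ltac:(lia) Ri b b1.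
  have [e2 _] := hGR i' ltac:(lia) Ri' b b2.
  by move: ii'; rewrite -e1 -e2 eqxx.
rewrite sum_bigcup ?iota_uniq //; last first.
  move=> i i' ir i'r _ _ ii'; rewrite !mem_index_iota in ir i'r.
  rewrite -setI_eq0; apply/eqP/setP => b; rewrite !inE.
  apply/negbTE/andP => -[b1 b2].
  have [e1 _] := hGN i ltac:(lia) b b1.
  have [e2 _] := hGN i' ltac:(lia) b b2.
  by move: ii'; rewrite -e1 -e2 eqxx.
rewrite -(hL r rt); congr (_ + _).
  rewrite big_mkcondr /= big_seq_cond [RHS]big_seq_cond; apply: eq_bigr => i /andP [ir Ri].
  rewrite mem_index_iota in ir; have ik : i <= k by lia.
  case: (u i); rewrite ?mul0n ?mul1n //.
  have [_ [dA [UA [_ [lA st]]]]] := hA i ik Ri.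
  have [_ [dAb [UAb [_ [lAb sbt]]]]] := hAb i ik Ri.
  have dAb' : forall j j', 1 <= j <= N i -> 1 <= j' <= N i -> j != j' ->
      [disjoint Ab (k - i) j & Ab (k - i) j'] by rewrite hN.
  rewrite (count_bstar (eps i) (w i) dX (hAX1 i ik Ri) (hAbX2 i ik Ri) dA dAb' (sT S)).
  have /andP [ew wN] := hew i ik Ri.
  have sumA : \sum_(1 <= h < (N i).+1) blocks_containing (A i h) (S :&: X1) = lam i r.
    rewrite -(hlam i r (S :&: X1)) ?subsetIr // -UA bc_sum sum_bigcup ?iota_uniq //.
      by apply: eq_bigr => h _; rewrite bc_sum.
    move=> h h' hr h'r _ _; rewrite !mem_index_iota in hr h'r; apply: dA; lia.
  have sumAb : \sum_(1 <= j < (N i).+1) blocks_containing (Ab (k - i) j) (S :&: X2)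
      = lamb (k - i) (t - r).
    rewrite -(hlamb (k - i) (t - r) (S :&: X2)) ?subsetIr ?leq_subr // -UAb -hN //.
    rewrite bc_sum sum_bigcup ?iota_uniq //.
      by apply: eq_bigr => j _; rewrite bc_sum.
    move=> h h' hr h'r _ _; rewrite !mem_index_iota in hr h'r; apply: dAb'; lia.
  rewrite /Lambda_star; case: ifP => rs; case: ifP => trs.
  - have hf : forall h, 1 <= h <= N i -> blocks_containing (A i h) (S :&: X1) = lamS i r.
      by move=> h hr; apply: lA; rewrite ?subsetIr.
    have hg : forall j, 1 <= j <= N i ->
        blocks_containing (Ab (k - i) j) (S :&: X2) = lamSb (k - i) (t - r).
      by move=> j jr; apply: lAb; rewrite ?subsetIr -?hN.
    by rewrite (@dsum_const _ _ _ (fun h => blocks_containing (A i h) (S :&: X1))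
      (fun j => blocks_containing (Ab (k - i) j) (S :&: X2)) _ _ ew wN hf hg).
  - have hf : forall h, 1 <= h <= N i -> blocks_containing (A i h) (S :&: X1) = lamS i r.
      by move=> h hr; apply: lA; rewrite ?subsetIr.
    rewrite (@dsum_left _ _ _ (fun h => blocks_containing (A i h) (S :&: X1))
      (fun j => blocks_containing (Ab (k - i) j) (S :&: X2)) _ ew wN hf) sumAb.
    nia.
  - have hg : forall j, 1 <= j <= N i ->
        blocks_containing (Ab (k - i) j) (S :&: X2) = lamSb (k - i) (t - r).
      by move=> j jr; apply: lAb; rewrite ?subsetIr -?hN.
    rewrite (@dsum_right _ _ _ (fun h => blocks_containing (A i h) (S :&: X1))
      (fun j => blocks_containing (Ab (k - i) j) (S :&: X2)) _ ew wN hg) sumA.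
    nia.
  - exfalso; have := hs i ik Ri; have := odd_double_half t.
    have : odd t <= 1 by case: (odd t).
    move/negbT: rs; move/negbT: trs; rewrite -!ltnNge.
    lia.
rewrite big_mkcondr /= big_seq_cond [RHS]big_seq_cond; apply: eq_bigr => i /andP [ir Ri].
rewrite mem_index_iota in ir; have ik : i <= k by lia.
case: (u i); rewrite ?mul0n ?mul1n //.
have h1 : forall b, b \in B i -> b \subset X1 by move=> b0 /(hB1 i ik) [].
have h2 : forall b, b \in Bb (k - i) -> b \subset X2 by move=> b0 /(hB2 _ (leq_subr _ _)) [].
rewrite (count_join dX h1 h2 (sT S)).
by rewrite (hlam i r) ?subsetIr // (hlamb (k - i) (t - r)) ?subsetIr ?leq_subr.
Qed.
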